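(* For real $\theta$ such that no lower parameter below is a nonpositive integer, near $x=0$, $${}_3F_2\!\left[\begin{matrix}-\tfrac16+\tfrac{\sqrt3}3\sin\theta,\ \tfrac16+\tfrac{\sqrt3}3\sin\theta,\ \tfrac12+\tfrac{\sqrt3}3\sin\theta\\ 1+\sin(\theta+\tfrac\pi6),\ 1+\sin(\theta-\tfrac\pi6)\end{matrix}\,\Big|\,-\frac{27x}{(1-4x)^3}\right]$$ $$=(1-4x)^{-\frac12+\sqrt3\sin\theta}\;{}_4F_3\!\left[\begin{matrix}-\tfrac12+\sqrt3\sin\theta,\ -\tfrac12-\cos\theta,\ -\tfrac12+\cos\theta,\ \tfrac32+\tfrac{\sqrt3}3\sin\theta\\ 1+\sin(\theta+\tfrac\pi6),\ 1+\sin(\theta-\tfrac\pi6),\ -\tfrac12+\tfrac{\sqrt3}3\sin\theta\end{matrix}\,\Big|\,x\right].$$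
   Context: ${}_pF_q$ denotes the generalized hypergeometric series $\sum_n\frac{\prod(a_i)_n}{n!\prod(b_i)_n}x^n$, with $(c)_n$ the Pochhammer symbol. *)

(* Defs.v *)
From Stdlib Require Import Reals List Factorial.
Import ListNotations.
Open Scope R_scope.

Fixpoint poch (c : R) (n : nat) : R :=
  match n with
  | O => 1
  | S m => poch c m * (c + INR m)
  end.

Definition poch_prod (cs : list R) (n : nat) : R :=
  fold_right (fun c acc => poch c n * acc) 1 cs.

Definition hyp_term (as_ bs : list R) (x : R) (n : nat) : R :=
  poch_prod as_ n / (INR (fact n) * poch_prod bs n) * x ^ n.

Definition hyp_sum (as_ bs : list R) (x l : R) : Prop :=
  infinite_sum (hyp_term as_ bs x) l.

Definition nonpos_int (c : R) : Prop := exists n : nat, c = - INR n.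

(* Main.v *)
Require Import Defs.
From Coquelicot Require Import Coquelicot.
From Stdlib Require Import Reals List Lra Lia Field Factorial.
Import ListNotations.
Open Scope R_scope.

Lemma poch_S c n : poch c (S n) = poch c n * (c + INR n).
Proof. reflexivity. Qed.

Lemma poch_nz c n : (forall k:nat, c + INR k <> 0) -> poch c n <> 0.
Proof. intros H; induction n; simpl; [lra|]. apply Rmult_integral_contrapositive; auto. Qed.

Lemma fact_nz n : INR (fact n) <> 0.
Proof. apply not_0_INR, fact_neq_0. Qed.

Definition Fm (c b1 b2 : R) (m n : nat) : R :=
  (-1)^n * poch c (m + 2*n) * 4^(m-n) /
  (INR (fact n) * INR (fact (m-n)) * poch b1 n * poch b2 n).

Definition Km (c b1 b2 : R) (m n : nat) : R :=
  (-1)^n * poch c (m + 2*n) * 4^(S m - n) /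
  (INR (fact n) * INR (fact (S m - n)) * poch b1 n * poch b2 n).

Definition Pp (t x : R) := x*x + 3*t*x + 3*t*t - 1/4.

Definition alph (t m : R) :=
  let M := m+1 in let u := 3*t - 1/2 + m in
  let e2 := 4*M - 4*u - 2 in let e1 := (4*u+2)*M - u*(u+1) in
  let w := 3*t*t - 1/4 in
  - (e2+e1+4*w) / (2*M*Pp t (m+1) * (t+m-1/2)).
Definition bet (t m : R) := 2 / ((m+1)*Pp t (m+1)*(t+m-1/2)).
Definition pp (t m n : R) := n * Pp t n * (alph t m + bet t m * n).

Definition rr (t C m : R) :=
  (3*t-1/2+m)*((m-1/2)*(m-1/2) - C*C)*(3/2+t+m)/((m+1)*Pp t (m+1)*(t-1/2+m)).

Lemma bracket (t C m n : R) : C*C = 1 - 3*t*t -> m + 1 <> 0 -> Pp t (m+1) <> 0 ->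
  t - 1/2 + m <> 0 -> n + 1 <> 0 -> Pp t (n+1) <> 0 ->
  4*(3*t-1/2+m+2*n) - rr t C m * (m+1-n) =
  -2*pp t m (n+1)*(3*t-1/2+m+2*n)*(3*t-1/2+m+2*n+1)*(m+1-n)/((n+1)*Pp t (n+1))
  - 8*pp t m n.
Proof.
  intros HC H1 H2 H3 H4 H5.
  unfold rr, pp, alph, bet.
  replace ((m-1/2)*(m-1/2) - C*C) with ((m-1/2)*(m-1/2) - 1 + 3*t*t) by (rewrite HC; ring).
  assert (t + m - 1/2 <> 0) by (intro; apply H3; lra).
  unfold Pp in *. field. repeat split; auto;
  intro HH; [apply H|apply H2|apply H5]; lra.
Qed.

Lemma sum_tele (g : nat -> R) N : sum_f_R0 (fun n => g (S n) - g n) N = g (S N) - g O.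
Proof. induction N; simpl; [ring|rewrite IHN; ring]. Qed.

Definition Bm (t C b1 b2 : R) (m : nat) : R :=
  poch (3*t-1/2) m * poch (-1/2 - C) m * poch (-1/2 + C) m * poch (3/2 + t) m /
  (INR (fact m) * poch b1 m * poch b2 m * poch (t - 1/2) m).

Lemma sum_scal_l (a : nat -> R) k N : sum_f_R0 (fun n => k * a n) N = k * sum_f_R0 a N.
Proof. induction N; simpl; [ring|rewrite IHN; ring]. Qed.

Lemma pow4_S k : 4^(S k) = 4 * 4^k. Proof. reflexivity. Qed.

Lemma L_F1 c b1 b2 m n : Fm c b1 b2 (S m) n = (c + INR m + 2*INR n) * Km c b1 b2 m n.
Proof.
  unfold Fm, Km. change (S m + 2*n)%nat with (S (m + 2*n)). rewrite poch_S.
  rewrite plus_INR, mult_INR. simpl (INR 2). unfold Rdiv. ring.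
Qed.

Lemma L_F0 c b1 b2 m n : (forall k:nat, b1 + INR k <> 0) -> (forall k:nat, b2 + INR k <> 0) ->
  (n <= m)%nat -> Fm c b1 b2 m n = INR (S m - n) / 4 * Km c b1 b2 m n.
Proof.
  intros h1 h2 H. unfold Fm, Km.
  replace (S m - n)%nat with (S (m - n)) by lia.
  rewrite pow4_S. change (fact (S (m-n))) with (S (m-n) * fact (m-n))%nat.
  rewrite mult_INR.
  pose proof (fact_nz n). pose proof (fact_nz (m-n)).
  pose proof (poch_nz b1 n h1). pose proof (poch_nz b2 n h2).
  assert (INR (S (m-n)) <> 0) by (apply not_0_INR; lia).
  field. repeat split; auto.
Qed.

Lemma L_K c b1 b2 m n : (forall k:nat, b1 + INR k <> 0) -> (forall k:nat, b2 + INR k <> 0) ->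
  (n <= m)%nat -> Km c b1 b2 m (S n) = Km c b1 b2 m n * (-1)*(c+INR m+2*INR n)*(c+INR m+2*INR n+1)
     * INR (S m - n) / (4*(INR n+1)*(b1+INR n)*(b2+INR n)).
Proof.
  intros h1 h2 H. unfold Km.
  replace (m + 2 * S n)%nat with (S (S (m + 2*n))) by lia.
  rewrite !poch_S.
  replace (S m - S n)%nat with (m - n)%nat by lia.
  replace (S m - n)%nat with (S (m - n)) by lia.
  rewrite pow4_S. change (fact (S (m-n))) with (S (m-n) * fact (m-n))%nat.
  change (fact (S n)) with (S n * fact n)%nat.
  rewrite !mult_INR, !S_INR, plus_INR, mult_INR, minus_INR by lia. simpl (INR 2).
  pose proof (fact_nz n). pose proof (fact_nz (m-n)).
  pose proof (poch_nz b1 n h1). pose proof (poch_nz b2 n h2).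
  pose proof (h1 n). pose proof (h2 n). pose proof (pos_INR n).
  assert (INR m - INR n + 1 <> 0) by (pose proof (le_INR _ _ H); lra).
  simpl pow. field. repeat split; auto; lra.
Qed.

Definition Gm (t c b1 b2 : R) (m n : nat) := 2 * pp t (INR m) (INR n) * Km c b1 b2 m n.

Lemma Pprod t C b1 b2 x : b1 = 1 + 3*t/2 + C/2 -> b2 = 1 + 3*t/2 - C/2 -> C*C = 1 - 3*t*t ->
  (b1 + x) * (b2 + x) = Pp t (x+1).
Proof. intros -> -> HC. unfold Pp.
  apply Rminus_diag_uniq.
  match goal with |- ?e = 0 => replace e with ((1-3*t*t-C*C)/4) by field end.
  rewrite HC; field. Qed.

Lemma alg_core (t C b1 b2 : R) :
  b1 = 1 + 3*t/2 + C/2 -> b2 = 1 + 3*t/2 - C/2 -> C*C = 1 - 3*t*t ->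
  (forall k:nat, b1 + INR k <> 0) -> (forall k:nat, b2 + INR k <> 0) ->
  (forall k:nat, t - 1/2 + INR k <> 0) ->
  forall m, sum_f_R0 (Fm (3*t-1/2) b1 b2 m) m = Bm t C b1 b2 m.
Proof.
  intros Hb1 Hb2 HC h1 h2 h3.
  set (c := 3*t-1/2).
  assert (HP : forall x, (b1 + x) * (b2 + x) = Pp t (x+1)) by (intro; apply Pprod with C; auto).
  assert (HPnz : forall k:nat, Pp t (INR k + 1) <> 0).
  { intro k. rewrite <- HP. apply Rmult_integral_contrapositive; auto. }
  induction m.
  - simpl. unfold Fm, Bm. simpl. field.
  -
    assert (Hm1 : INR m + 1 <> 0) by (pose proof (pos_INR m); lra).
    assert (Hterm : forall n, (n <= m)%nat ->
       Fm c b1 b2 (S m) n - rr t C (INR m) * Fm c b1 b2 m n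
          = (Gm t c b1 b2 m (S n) - Gm t c b1 b2 m n)).
    { intros n Hn. unfold Gm. rewrite L_F1, L_F0, L_K by auto.
      rewrite S_INR.
      assert (Hn1 : INR n + 1 <> 0) by (pose proof (pos_INR n); lra).
      pose proof (bracket t C (INR m) (INR n) HC Hm1 (HPnz m) (h3 m) Hn1 (HPnz n)) as Hb.
      rewrite minus_INR by lia. rewrite S_INR.
      rewrite Rmult_assoc with (r1 := 4*(INR n + 1)), HP.
      set (K := Km c b1 b2 m n).
      transitivity (K * ((4*(3*t-1/2+INR m+2*INR n) - rr t C (INR m) * (INR m + 1 - INR n))/4)).
      { unfold c. field. }
      rewrite Hb. unfold c. field. split; auto. }
    assert (Hlast : Fm c b1 b2 (S m) (S m) = - Gm t c b1 b2 m (S m)).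
    { unfold Gm. rewrite L_F1.
      assert (Hn1 : INR (S m) + 1 <> 0) by (pose proof (pos_INR (S m)); lra).
      pose proof (bracket t C (INR m) (INR (S m)) HC Hm1 (HPnz m) (h3 m) Hn1 (HPnz (S m))) as Hb.
      rewrite S_INR in *. unfold c.
      replace (INR m + 1 - (INR m + 1)) with 0 in Hb by ring.
      rewrite !Rmult_0_r in Hb. unfold Rdiv in Hb. rewrite Rmult_0_l, Rminus_0_r in Hb.
      assert (E : 3 * t - 1 / 2 + INR m + 2 * (INR m + 1) = -2 * pp t (INR m) (INR m + 1)) by lra.
      rewrite E. ring. }
    simpl sum_f_R0 at 1. rewrite Hlast.
    rewrite (sum_eq _ (fun n => rr t C (INR m) * Fm c b1 b2 m n
          + (Gm t c b1 b2 m (S n) - Gm t c b1 b2 m n))) by (intros i Hi; pose proof (Hterm i Hi); lra).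
    rewrite sum_plus, sum_tele.
    rewrite sum_scal_l.
    unfold c in *. rewrite IHm.
    assert (HG0 : Gm t (3*t-1/2) b1 b2 m 0 = 0) by (unfold Gm, pp; simpl; ring).
    rewrite HG0.
    unfold Bm, rr. rewrite !poch_S.
    change (fact (S m)) with (S m * fact m)%nat. rewrite mult_INR, S_INR.
    rewrite <- (HP (INR m)).
    pose proof (fact_nz m). pose proof (poch_nz b1 m h1). pose proof (poch_nz b2 m h2).
    pose proof (poch_nz _ m h3). pose proof (h1 m). pose proof (h2 m). pose proof (h3 m).
    field. repeat split; auto.
    all: intro; apply (h3 m); lra.
Qed.


Lemma poch_S_ c n : poch c (S n) = poch c n * (c + INR n).
Proof. reflexivity. Qed.

Definition cf (a : R) (n : nat) : R := poch a n / INR (fact n).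

Lemma fact_pos' n : 0 < INR (fact n).
Proof. apply lt_0_INR, lt_O_fact. Qed.

Lemma cf_S a n : cf a (S n) = cf a n * (a + INR n) / (INR n + 1).
Proof.
  unfold cf. rewrite poch_S_. change (fact (S n)) with (S n * fact n)%nat.
  rewrite mult_INR, S_INR. pose proof (fact_pos' n). pose proof (pos_INR n).
  field; lra.
Qed.

Lemma poch_abs a n : Rabs (poch a n) <= poch (Rabs a + 1) n.
Proof.
  induction n; simpl. rewrite Rabs_R1; lra.
  rewrite Rabs_mult. apply Rmult_le_compat; try apply Rabs_pos; auto.
  pose proof (Rabs_triang a (INR n)). rewrite (Rabs_right (INR n)) in H by (apply Rle_ge, pos_INR). lra.
Qed.

Lemma poch_pos a n : 0 < a -> 0 < poch a n.
Proof. intros Ha; induction n; simpl; [lra|]. pose proof (pos_INR n). apply Rmult_lt_0_compat; lra. Qed.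

Lemma cf_abs a n : Rabs (cf a n) <= cf (Rabs a + 1) n.
Proof.
  unfold cf, Rdiv. rewrite Rabs_mult, (Rabs_right (/ _)).
  2: apply Rle_ge, Rlt_le, Rinv_0_lt_compat, fact_pos'.
  apply Rmult_le_compat_r. apply Rlt_le, Rinv_0_lt_compat, fact_pos'. apply poch_abs.
Qed.

Lemma cf_pos a n : 0 < a -> 0 < cf a n.
Proof. intros. unfold cf. apply Rdiv_lt_0_compat. apply poch_pos; auto. apply fact_pos'. Qed.

Lemma CV_radius_cf_pos a : 0 < a -> CV_radius (cf a) = 1.
Proof.
  intros Ha. replace 1 with (/ 1) by field.
  apply CV_radius_finite_DAlembert; [intro n; apply Rgt_not_eq, cf_pos; auto | lra |].
  apply is_lim_seq_ext with (fun n => 1 + (a - 1) * / INR (S n)).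
  { intro n. rewrite cf_S. pose proof (cf_pos a n Ha). pose proof (pos_INR n).
    rewrite S_INR.
    replace (cf a n * (a + INR n) / (INR n + 1) / cf a n) with ((a + INR n) / (INR n + 1)) by (field; lra).
    rewrite Rabs_right. field. lra.
    apply Rle_ge. apply Rdiv_le_0_compat; lra. }
  assert (H0 : is_lim_seq (fun n => / INR (S n)) 0).
  { apply (is_lim_seq_incr_1 (fun n => / INR n)).
    replace (Finite 0) with (Rbar_inv p_infty) by reflexivity.
    apply is_lim_seq_inv. apply is_lim_seq_INR. discriminate. }
  pose proof (is_lim_seq_scal_l _ (a-1) _ H0) as H1. simpl in H1.
  replace 1 with (1 + (a-1)*0) at 1 by ring.
  apply is_lim_seq_plus'. apply is_lim_seq_const. exact H1.
Qed.

Lemma CV_radius_cf a : Rbar_le 1 (CV_radius (cf a)).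
Proof.
  pose proof (CV_radius_ge_0 (cf a)) as H0.
  destruct (CV_radius (cf a)) eqn:E; simpl in *; auto.
  destruct (Rle_lt_dec 1 r) as [h|h]; auto. exfalso.
  set (x := (r+1)/2).
  assert (Hx : Rabs x = x) by (apply Rabs_right; unfold x; lra).
  apply (CV_disk_outside (cf a) x). rewrite E, Hx. simpl. unfold x; lra.
  apply ex_series_lim_0.
  apply (@ex_series_le R_AbsRing R_CompleteNormedModule) with (fun n => Rabs (cf (Rabs a + 1) n * x ^ n)).
  - intro n. change norm with Rabs. simpl.
    rewrite !Rabs_mult. apply Rmult_le_compat_r. apply Rabs_pos.
    rewrite (Rabs_right (cf (Rabs a + 1) n)). apply cf_abs. apply Rle_ge, Rlt_le, cf_pos.
    pose proof (Rabs_pos a); lra.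
  - apply CV_disk_inside. rewrite CV_radius_cf_pos by (pose proof (Rabs_pos a); lra).
    rewrite Hx. simpl. unfold x; lra.
Qed.

Lemma cf_in a v : Rabs v < 1 -> Rbar_lt (Rabs v) (CV_radius (cf a)).
Proof.
  intro H. pose proof (CV_radius_cf a). destruct (CV_radius (cf a)); simpl in *; auto; lra.
Qed.

Lemma PS_derive_cf a n : PS_derive (cf a) n = cf a n * (a + INR n).
Proof.
  unfold PS_derive. rewrite cf_S. rewrite S_INR. pose proof (pos_INR n). field. lra.
Qed.

Lemma binom_key a v : Rabs v < 1 ->
  (1 - v) * PSeries (PS_derive (cf a)) v = a * PSeries (cf a) v.
Proof.
  intros Hv.
  pose proof (cf_in a v Hv) as Hin.
  set (D := PSeries (PS_derive (cf a)) v).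
  assert (H1 : is_pseries (PS_derive (cf a)) v D).
  { apply PSeries_correct. apply ex_pseries_derive; auto. }
  assert (H2 : is_pseries (PS_incr_1 (PS_derive (cf a))) v (scal v D)) by (apply (@is_pseries_incr_1 R_AbsRing R_NormedModule); auto).
  assert (H3 := @is_pseries_minus R_AbsRing R_NormedModule _ _ _ _ _ H1 H2).
  assert (H4 : is_pseries (PS_scal a (cf a)) v (plus D (opp (scal v D)))).
  { eapply (@is_pseries_ext R_AbsRing R_NormedModule); [|exact H3].
    intro n. unfold PS_minus, PS_scal, PS_incr_1. rewrite PS_derive_cf.
    destruct n.
    - simpl. change zero with 0. change (scal a (cf a 0)) with (a * cf a 0).
      match goal with |- ?x = ?y => change (@eq R x y) end. change (plus ?x (opp ?y)) with (x - y). ring.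
    - rewrite PS_derive_cf. change (plus ?x (opp ?y)) with (x - y). change (scal a (cf a (S n))) with (a * cf a (S n)).
      match goal with |- ?x = ?y => change (@eq R x y) end.
      rewrite cf_S, S_INR. pose proof (pos_INR n). field. lra. }
  apply is_pseries_unique in H4. rewrite PSeries_scal in H4. change (plus D (opp (scal v D))) with (D - v * D) in H4.
  rewrite H4. unfold D. ring.
Qed.

Lemma is_derive_Rpow1 a v : v < 1 ->
  is_derive (fun y => Rpower (1 - y) a) v (- a * Rpower (1 - v) a / (1 - v)).
Proof.
  intros Hv. unfold Rpower. auto_derive. lra. replace (1 + - v) with (1 - v) by ring. field. lra.
Qed.

Lemma binom_series a v : Rabs v < 1 ->
  infinite_sum (fun j => cf a j * v ^ j) (Rpower (1 - v) (- a)).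
Proof.
  intros Hv.
  set (f := PSeries (cf a)).
  set (g := fun y => f y * Rpower (1 - y) a).
  assert (Hd : forall y, Rabs y < 1 -> is_derive g y 0).
  { intros y Hy.
    assert (Hy1 : y < 1) by (apply Rabs_def2 in Hy; lra).
    pose proof (is_derive_PSeries (cf a) y (cf_in a y Hy)) as H1.
    pose proof (is_derive_Rpow1 a y Hy1) as H2.
    pose proof (is_derive_mult _ _ _ _ _ H1 H2 Rmult_comm) as H3.
    unfold g. eapply is_derive_ext; [intro; reflexivity|].
    replace 0 with (plus (mult (PSeries (PS_derive (cf a)) y) (Rpower (1 - y) a))
                         (mult (PSeries (cf a) y) (- a * Rpower (1 - y) a / (1 - y)))).
    exact H3.
    change (plus ?x ?z) with (x + z). change (mult ?x ?z) with (x * z).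
    pose proof (binom_key a y Hy) as K.
    match goal with |- ?x = ?z => change (@eq R x z) end.
    replace (PSeries (cf a) y * (- a * Rpower (1 - y) a / (1 - y))) with
      (- (a * PSeries (cf a) y) * Rpower (1 - y) a / (1 - y)) by (field; lra).
    rewrite <- K. field. lra. }
  assert (Hrng : forall y, Rmin 0 v <= y <= Rmax 0 v -> Rabs y < 1).
  { intros y [Hy1 Hy2]. apply Rabs_def2 in Hv. unfold Rmin, Rmax in *.
    destruct (Rle_dec 0 v); apply Rabs_def1; lra. }
  destruct (MVT_gen g 0 v (fun _ => 0)) as [c [_ Hc]].
  { intros y Hy. apply Hd, Hrng. lra. }
  { intros y Hy. apply continuity_pt_filterlim.
    apply (@ex_derive_continuous R_AbsRing R_NormedModule).
    exists 0. apply Hd, Hrng; auto. }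
  rewrite Rmult_0_l in Hc.
  assert (Hg0 : g 0 = 1).
  { unfold g, f. rewrite PSeries_0. unfold cf. simpl. unfold Rpower.
    replace (1 - 0) with 1 by ring. rewrite ln_1, Rmult_0_r, exp_0. field. }
  assert (Hfv : f v = Rpower (1 - v) (- a)).
  { rewrite Rpower_Ropp. assert (Hp : 0 < Rpower (1 - v) a) by (unfold Rpower; apply exp_pos).
    assert (g v = 1) by lra. unfold g in H. apply Rmult_eq_reg_r with (Rpower (1 - v) a).
    rewrite H. field. lra. lra. }
  rewrite <- Hfv. apply is_series_Reals.
  eapply (@is_series_ext R_AbsRing R_NormedModule).
  2: { apply (PSeries_correct (cf a) v). apply CV_radius_inside, cf_in; auto. }
  intro n. simpl. rewrite pow_n_pow. change (scal (v ^ n) (cf a n)) with (v ^ n * cf a n). ring.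
Qed.


Lemma diag_sum (T : nat -> nat -> R) M :
  sum_f_R0 (fun m => sum_f_R0 (fun n => T n (m - n)%nat) m) M =
  sum_f_R0 (fun n => sum_f_R0 (T n) (M - n)) M.
Proof.
  induction M.
  - simpl. reflexivity.
  - change (sum_f_R0 (fun m => sum_f_R0 (fun n => T n (m - n)%nat) m) (S M)) with
      (sum_f_R0 (fun m => sum_f_R0 (fun n => T n (m - n)%nat) m) M +
       sum_f_R0 (fun n => T n (S M - n)%nat) (S M)).
    rewrite IHM.
    change (sum_f_R0 (fun n => sum_f_R0 (T n) (S M - n)) (S M)) with
      (sum_f_R0 (fun n => sum_f_R0 (T n) (S M - n)) M + sum_f_R0 (T (S M)) (S M - S M)).
    rewrite (sum_eq (fun n => sum_f_R0 (T n) (S M - n)) (fun n => sum_f_R0 (T n) (M - n) + T n (S M - n)%nat)).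
    2: { intros i Hi. replace (S M - i)%nat with (S (M - i)) by lia. simpl. reflexivity. }
    rewrite sum_plus. rewrite Nat.sub_diag. simpl sum_f_R0 at 4.
    change (sum_f_R0 (fun n => T n (S M - n)%nat) (S M)) with
      (sum_f_R0 (fun n => T n (S M - n)%nat) M + T (S M) (S M - S M)%nat).
    rewrite Nat.sub_diag. change (sum_f_R0 (T (S M)) 0) with (T (S M) 0%nat). ring.
Qed.

Lemma le_eps (x y : R) : (forall e, 0 < e -> x <= y + e) -> x <= y.
Proof.
  intros H. destruct (Rle_lt_dec x y) as [h|h]; auto.
  specialize (H ((x - y)/2)). lra.
Qed.

Lemma partial_diff (f g : nat -> R) k d : (forall j, Rabs (f j) <= g j) ->
  Rabs (sum_f_R0 f (k + d) - sum_f_R0 f k) <= sum_f_R0 g (k + d) - sum_f_R0 g k.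
Proof.
  intros H. induction d.
  - rewrite Nat.add_0_r. unfold Rminus. rewrite !Rplus_opp_r, Rabs_R0. lra.
  - replace (k + S d)%nat with (S (k + d)) by lia. simpl.
    pose proof (H (S (k+d))).
    replace (sum_f_R0 f (k + d) + f (S (k + d)) - sum_f_R0 f k) with
      ((sum_f_R0 f (k + d) - sum_f_R0 f k) + f (S (k + d))) by ring.
    eapply Rle_trans. apply Rabs_triang. lra.
Qed.

Lemma tail_bound (f g : nat -> R) a u : (forall j, Rabs (f j) <= g j) ->
  infinite_sum f a -> infinite_sum g u ->
  forall k, Rabs (a - sum_f_R0 f k) <= u - sum_f_R0 g k.
Proof.
  intros H Hf Hg k. apply le_eps. intros e He.
  destruct (Hf (e/2)) as [N1 HN1]; [lra|].
  destruct (Hg (e/2)) as [N2 HN2]; [lra|].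
  set (J := (k + (N1 + N2))%nat).
  specialize (HN1 J ltac:(unfold J; lia)). specialize (HN2 J ltac:(unfold J; lia)).
  unfold Rdist in *.
  pose proof (partial_diff f g k (N1+N2) H). fold J in H0.
  replace (a - sum_f_R0 f k) with ((a - sum_f_R0 f J) + (sum_f_R0 f J - sum_f_R0 f k)) by ring.
  eapply Rle_trans. apply Rabs_triang.
  rewrite Rabs_minus_sym in HN1.
  apply Rabs_def2 in HN2. lra.
Qed.

Lemma finite_unif (P : nat -> nat -> Prop) N :
  (forall n, (n <= N)%nat -> exists K, forall k, (k >= K)%nat -> P n k) ->
  exists K, forall n k, (n <= N)%nat -> (k >= K)%nat -> P n k.
Proof.
  induction N; intros H.
  - destruct (H O (le_n O)) as [K HK]. exists K. intros n k Hn Hk. replace n with O by lia. auto.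
  - destruct IHN as [K1 HK1]. { intros n Hn. apply H. lia. }
    destruct (H (S N) (le_n _)) as [K2 HK2]. exists (K1 + K2)%nat.
    intros n k Hn Hk. destruct (Nat.eq_dec n (S N)). subst; apply HK2; lia. apply HK1; lia.
Qed.

Lemma rearrange (T U : nat -> nat -> R) (a u : nat -> R) (Su L : R) :
  (forall n j, Rabs (T n j) <= U n j) ->
  (forall n, infinite_sum (T n) (a n)) ->
  (forall n, infinite_sum (U n) (u n)) ->
  infinite_sum u Su -> infinite_sum a L ->
  infinite_sum (fun m => sum_f_R0 (fun n => T n (m - n)%nat) m) L.
Proof.
  intros HTU Ha Hu HSu HL e He.
  set (rho := fun n k => u n - sum_f_R0 (U n) k).
  assert (Hrho : forall n k, Rabs (a n - sum_f_R0 (T n) k) <= rho n k).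
  { intros n k. apply tail_bound with (g := U n); auto. }
  assert (Hrho_u : forall n k, rho n k <= u n).
  { intros n k. unfold rho. assert (0 <= sum_f_R0 (U n) k).
    { apply cond_pos_sum. intro j. pose proof (HTU n j). pose proof (Rabs_pos (T n j)). lra. }
    lra. }
  destruct (HSu (e/4)) as [N1 HN1]; [lra|].
  destruct (HL (e/4)) as [N2 HN2]; [lra|].
  set (d := e / (4 * (INR N1 + 1))).
  assert (Hd : 0 < d) by (unfold d; pose proof (pos_INR N1); apply Rdiv_lt_0_compat; lra).
  destruct (finite_unif (fun n k => rho n k < d) N1) as [K HK].
  { intros n _. destruct (Hu n d Hd) as [K HK]. exists K. intros k Hk.
    specialize (HK k Hk). unfold Rdist in HK. apply Rabs_def2 in HK. unfold rho. lra. }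
  exists (N2 + N1 + K + 1)%nat. intros M HM.
  unfold Rdist. rewrite diag_sum.
  assert (E : sum_f_R0 (fun n => sum_f_R0 (T n) (M - n)) M =
              sum_f_R0 a M - sum_f_R0 (fun n => a n - sum_f_R0 (T n) (M - n)) M).
  { rewrite minus_sum. ring. }
  rewrite E.
  assert (B1 : Rabs (sum_f_R0 (fun n => a n - sum_f_R0 (T n) (M - n)) M) <
               e/4 + e/2).
  { eapply Rle_lt_trans. apply Rsum_abs.
    eapply Rle_lt_trans. apply sum_Rle with (Bn := fun n => rho n (M - n)%nat).
    { intros; apply Hrho. }
    rewrite (tech2 _ N1 M) by lia.
    apply Rplus_le_lt_compat.
    - apply Rle_trans with (sum_f_R0 (fun _ => d) N1).
      { apply sum_Rle. intros n Hn. left. apply HK; lia. }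
      rewrite sum_cte. unfold d. rewrite S_INR. right. field. pose proof (pos_INR N1). lra.
    - apply Rle_lt_trans with (sum_f_R0 (fun i => u (S N1 + i)%nat) (M - S N1)).
      { apply sum_Rle. intros; apply Hrho_u. }
      pose proof (tech2 u N1 M ltac:(lia)) as Ht.
      pose proof (HN1 M ltac:(lia)) as H1. pose proof (HN1 N1 ltac:(lia)) as H2.
      unfold Rdist in *. apply Rabs_def2 in H1. apply Rabs_def2 in H2. lra. }
  pose proof (HN2 M ltac:(lia)) as H3. unfold Rdist in H3.
  replace (sum_f_R0 a M - sum_f_R0 (fun n => a n - sum_f_R0 (T n) (M - n)) M - L) with
    ((sum_f_R0 a M - L) - sum_f_R0 (fun n => a n - sum_f_R0 (T n) (M - n)) M) by ring.
  eapply Rle_lt_trans. apply Rabs_triang. rewrite Rabs_Ropp. lra.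
Qed.


Lemma isum_ext (f g : nat -> R) l : (forall n, f n = g n) -> infinite_sum f l -> infinite_sum g l.
Proof.
  intros H Hf e He. destruct (Hf e He) as [N HN]. exists N. intros n Hn.
  rewrite <- (sum_eq f g n) by auto. auto.
Qed.

Lemma isum_scal (f : nat -> R) k l : infinite_sum f l -> infinite_sum (fun n => k * f n) (k * l).
Proof.
  intros H. apply is_series_Reals. apply is_series_Reals in H.
  apply (@is_series_scal_l R_AbsRing R_NormedModule k f l) in H. exact H.
Qed.

Lemma isum_cmp (f g : nat -> R) G : (forall n, Rabs (f n) <= g n) -> infinite_sum g G ->
  exists F, infinite_sum f F.
Proof.
  intros H Hg. assert (ex_series f).
  { apply (@ex_series_le R_AbsRing R_CompleteNormedModule) with g. exact H.
    exists G. apply is_series_Reals; auto. }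
  destruct H0 as [F HF]. exists F. apply is_series_Reals; auto.
Qed.

Lemma abs_isum_le (f g : nat -> R) a u : (forall j, Rabs (f j) <= g j) ->
  infinite_sum f a -> infinite_sum g u -> Rabs a <= u.
Proof.
  intros H Hf Hg. pose proof (tail_bound f g a u H Hf Hg O). simpl in H0.
  pose proof (H O). replace a with ((a - f O) + f O) by ring.
  eapply Rle_trans. apply Rabs_triang. lra.
Qed.

Lemma poch_add c p k : poch c (p + k) = poch c p * poch (c + INR p) k.
Proof.
  induction k.
  - rewrite Nat.add_0_r. simpl. ring.
  - rewrite Nat.add_succ_r. simpl. rewrite IHk, plus_INR. ring.
Qed.

Lemma poch_triple t n :
  27^n * (poch (t-1/6) n * poch (t+1/6) n * poch (t+1/2) n) = poch (3*t-1/2) (3*n).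
Proof.
  induction n.
  - simpl. ring.
  - replace (3 * S n)%nat with (S (S (S (3*n)))) by lia. rewrite !poch_S. change (27 ^ S n) with (27 * 27 ^ n).
    rewrite <- IHn. rewrite !S_INR, mult_INR. simpl (INR 3). field.
Qed.

Lemma poch_abs_le a b n : (forall k:nat, Rabs (a + INR k) <= b + INR k) -> 0 <= b ->
  Rabs (poch a n) <= poch b n.
Proof.
  intros H Hb. induction n; simpl. rewrite Rabs_R1; lra.
  rewrite Rabs_mult. apply Rmult_le_compat; try apply Rabs_pos; auto.
Qed.

Lemma Rpower_split p a n : 0 < p ->
  Rpower p (- (a + 3 * INR n)) = Rpower p (- a) * / (p ^ 3) ^ n.
Proof.
  intros Hp. replace (- (a + 3 * INR n)) with (- a + - INR (3 * n)) by (rewrite mult_INR; simpl; ring).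
  rewrite Rpower_plus, (Rpower_Ropp p (INR (3*n))), Rpower_pow by auto. rewrite pow_mult. reflexivity.
Qed.

Definition Acoef (a1 a2 a3 b1 b2 : R) (n : nat) : R :=
  poch_prod [a1; a2; a3] n / (INR (fact n) * poch_prod [b1; b2] n).

Lemma Acoef_S a1 a2 a3 b1 b2 n : b1 + INR n <> 0 -> b2 + INR n <> 0 ->
  (forall k:nat, b1 + INR k <> 0) -> (forall k:nat, b2 + INR k <> 0) ->
  Acoef a1 a2 a3 b1 b2 (S n) = Acoef a1 a2 a3 b1 b2 n *
    ((a1 + INR n) * (a2 + INR n) * (a3 + INR n) / ((INR n + 1) * (b1 + INR n) * (b2 + INR n))).
Proof.
  intros h1 h2 H1 H2. unfold Acoef, poch_prod. simpl fold_right.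
  change (fact (S n)) with (S n * fact n)%nat. rewrite mult_INR, S_INR. simpl poch.
  pose proof (fact_nz n). pose proof (poch_nz b1 n H1). pose proof (poch_nz b2 n H2).
  pose proof (pos_INR n). field. repeat split; auto; lra.
Qed.

Lemma Acoef_bound a1 a2 a3 b1 b2 : Rabs a1 <= 2 -> Rabs a2 <= 2 -> Rabs a3 <= 2 ->
  0 <= b1 -> 0 <= b2 -> (forall k:nat, b1 + INR k <> 0) -> (forall k:nat, b2 + INR k <> 0) ->
  exists K, 0 <= K /\ forall n, Rabs (Acoef a1 a2 a3 b1 b2 n) <= K * 30 ^ n.
Proof.
  intros ha1 ha2 ha3 hb1 hb2 H1 H2.
  set (A := Acoef a1 a2 a3 b1 b2).
  exists (1 + Rabs (A 1%nat)). split. pose proof (Rabs_pos (A 1%nat)); lra.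
  assert (Hstep : forall n, (1 <= n)%nat -> Rabs (A (S n)) <= 30 * Rabs (A n)).
  { intros n Hn. unfold A. rewrite Acoef_S by auto. fold A.
    rewrite Rabs_mult. rewrite Rmult_comm. apply Rmult_le_compat_r. apply Rabs_pos.
    assert (Hn' : 1 <= INR n) by (apply (le_INR 1); lia).
    set (m := INR n) in *.
    assert (Hd : 0 < (m + 1) * (b1 + m) * (b2 + m)).
    { apply Rmult_lt_0_compat. apply Rmult_lt_0_compat; lra. lra. }
    rewrite Rabs_div by lra. rewrite (Rabs_right ((m + 1) * (b1 + m) * (b2 + m))) by lra.
    apply Rle_div_l. lra.
    rewrite !Rabs_mult.
    assert (E1 : Rabs (a1 + m) <= m + 2) by (pose proof (Rabs_triang a1 m); rewrite (Rabs_right m) in H by lra; lra).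
    assert (E2 : Rabs (a2 + m) <= m + 2) by (pose proof (Rabs_triang a2 m); rewrite (Rabs_right m) in H by lra; lra).
    assert (E3 : Rabs (a3 + m) <= m + 2) by (pose proof (Rabs_triang a3 m); rewrite (Rabs_right m) in H by lra; lra).
    apply Rle_trans with ((m+2)*(m+2)*(m+2)).
    { apply Rmult_le_compat; try apply Rabs_pos. 
      apply Rmult_le_pos; apply Rabs_pos.
      apply Rmult_le_compat; try apply Rabs_pos; auto. auto. }
    apply Rle_trans with (30 * ((m + 1) * m * m)).
    { nra. }
    apply Rmult_le_compat_l. lra.
    apply Rmult_le_compat. nra. lra. apply Rmult_le_compat; lra. lra. }
  intro n. induction n.
  - assert (A 0%nat = 1) by (unfold A, Acoef, poch_prod; simpl; field).
    rewrite H, Rabs_R1. pose proof (Rabs_pos (A 1%nat)). simpl. lra.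
  - destruct n.
    + simpl. pose proof (Rabs_pos (A 1%nat)). lra.
    + eapply Rle_trans. apply Hstep. lia. simpl pow. simpl pow in IHn. nra.
Qed.


Theorem mainTheorem13 (theta : R) :
  let s := sin theta in
  let b1 := 1 + sin (theta + PI / 6) in
  let b2 := 1 + sin (theta - PI / 6) in
  let b3 := -1/2 + sqrt 3 / 3 * s in
  ~ nonpos_int b1 -> ~ nonpos_int b2 -> ~ nonpos_int b3 ->
  exists delta : R, 0 < delta /\
    forall x : R, Rabs x < delta ->
      exists l1 l2 : R,
        hyp_sum [-1/6 + sqrt 3 / 3 * s; 1/6 + sqrt 3 / 3 * s; 1/2 + sqrt 3 / 3 * s]
                [b1; b2]
                (- (27 * x) / (1 - 4 * x) ^ 3) l1 /\
        hyp_sum [-1/2 + sqrt 3 * s; -1/2 - cos theta; -1/2 + cos theta;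
                 3/2 + sqrt 3 / 3 * s]
                [b1; b2; b3] x l2 /\
        l1 = Rpower (1 - 4 * x) (-1/2 + sqrt 3 * s) * l2.
Proof.
  intros s b1 b2 b3 Hn1 Hn2 Hn3.
  set (t := sqrt 3 / 3 * s). set (C := cos theta).
  assert (Hsq : sqrt 3 * sqrt 3 = 3) by (apply sqrt_sqrt; lra).
  assert (Hsq0 : 0 < sqrt 3) by (apply sqrt_lt_R0; lra).
  assert (Ht3 : sqrt 3 * s = 3 * t) by (unfold t; field).
  assert (HsC : s * s + C * C = 1) by (unfold s, C; rewrite <- !Rsqr_pow2 || idtac; pose proof (sin2_cos2 theta); unfold Rsqr in H; lra).
  assert (HC : C * C = 1 - 3 * t * t).
  { replace (3*t*t) with (s*s) by (unfold t; replace (3 * (sqrt 3 / 3 * s) * (sqrt 3 / 3 * s)) with (sqrt 3 * sqrt 3 * s * s / 3) by field; rewrite Hsq; field). lra. }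
  assert (Hb1 : b1 = 1 + 3*t/2 + C/2).
  { unfold b1. rewrite sin_plus, sin_PI6, cos_PI6. fold s C. 
    replace (s * (sqrt 3 / 2)) with (sqrt 3 * s / 2) by field. rewrite Ht3. field. }
  assert (Hb2 : b2 = 1 + 3*t/2 - C/2).
  { unfold b2. rewrite sin_minus, sin_PI6, cos_PI6. fold s C.
    replace (s * (sqrt 3 / 2)) with (sqrt 3 * s / 2) by field. rewrite Ht3. field. }
  assert (Hb3 : b3 = t - 1/2) by (unfold b3; fold t; lra).
  assert (hk1 : forall k:nat, b1 + INR k <> 0) by (intros k H; apply Hn1; exists k; lra).
  assert (hk2 : forall k:nat, b2 + INR k <> 0) by (intros k H; apply Hn2; exists k; lra).
  assert (hk3 : forall k:nat, t - 1/2 + INR k <> 0) by (intros k H; apply Hn3; exists k; rewrite Hb3; lra).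
  assert (Hs1 : -1 <= s <= 1) by (unfold s; apply SIN_bound).
  assert (Hb1p : 0 <= b1) by (unfold b1; pose proof (SIN_bound (theta + PI/6)); lra).
  assert (Hb2p : 0 <= b2) by (unfold b2; pose proof (SIN_bound (theta - PI/6)); lra).
  assert (Hsq2 : sqrt 3 < 2).
  { apply Rsqr_incrst_0; try lra. unfold Rsqr. lra. }
  assert (Ht1 : Rabs t <= 1).
  { unfold t. rewrite Rabs_mult. rewrite (Rabs_right (sqrt 3 / 3)) by (apply Rle_ge, Rdiv_le_0_compat; lra).
    assert (Rabs s <= 1) by (apply Rabs_le; lra).
    apply Rle_trans with (sqrt 3 / 3 * 1). apply Rmult_le_compat_l. apply Rdiv_le_0_compat; lra. auto. lra. }
  set (c := -1/2 + sqrt 3 * s).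
  assert (Hc : c = 3*t - 1/2) by (unfold c; lra).
  assert (Hst : s = 3 * t / sqrt 3) by (rewrite <- Ht3; field; lra).
  assert (Htb : -1 <= t <= 1) by (apply Rabs_le_between; auto).
  destruct (Acoef_bound (-1/6 + t) (1/6 + t) (1/2 + t) b1 b2) as [K [HK0 HK]];
    [apply Rabs_le; lra|apply Rabs_le; lra|apply Rabs_le; lra|auto|auto|auto|auto|].
  set (A := Acoef (-1/6 + t) (1/6 + t) (1/2 + t) b1 b2) in *.
  exists (1/1000). split; [lra|]. intros x Hx.
  assert (Hx' : -1/1000 < x < 1/1000) by (apply Rabs_def2 in Hx; lra).
  assert (Hv : Rabs (4 * x) < 1) by (apply Rabs_def1; lra).
  assert (Hva : Rabs (Rabs (4 * x)) < 1) by (rewrite Rabs_Rabsolu; auto).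
  set (q := 1 - 4 * x). assert (Hq : 0 < q) by (unfold q; lra).
  set (p := 1 - Rabs (4 * x)).
  assert (Hp : 996/1000 < p) by (unfold p; rewrite Rabs_mult, (Rabs_right 4) by lra; lra).
  set (T := fun n j => A n * (-(27*x))^n * (cf (c + 3 * INR n) j * (4*x)^j)).
  set (U := fun n j => Rabs (A n) * Rabs (27*x)^n * (cf (Rabs c + 3 * INR n) j * Rabs (4*x)^j)).
  set (a := fun n => A n * (-(27*x))^n * Rpower q (-(c + 3 * INR n))).
  set (u := fun n => Rabs (A n) * Rabs (27*x)^n * Rpower p (-(Rabs c + 3 * INR n))).
  assert (HTa : forall n, infinite_sum (T n) (a n)).
  { intro n. unfold T, a. apply isum_scal. apply binom_series; auto. }
  assert (HUu : forall n, infinite_sum (U n) (u n)).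
  { intro n. unfold U, u. apply isum_scal. apply binom_series; auto. }
  assert (HTU : forall n j, Rabs (T n j) <= U n j).
  { intros n j. unfold T, U. set (y := 27*x). set (w := 4*x). rewrite !Rabs_mult, <- !RPow_abs, Rabs_Ropp.
    apply Rmult_le_compat_l. apply Rmult_le_pos; [apply Rabs_pos|apply pow_le, Rabs_pos].
    apply Rmult_le_compat_r. apply pow_le, Rabs_pos.
    unfold cf. unfold Rdiv. rewrite Rabs_mult, (Rabs_right (/ _)) by (apply Rle_ge, Rlt_le, Rinv_0_lt_compat, fact_pos').
    apply Rmult_le_compat_r. apply Rlt_le, Rinv_0_lt_compat, fact_pos'.
    apply poch_abs_le.
    - intro k. pose proof (pos_INR n). pose proof (pos_INR k).
      eapply Rle_trans. apply Rabs_triang. rewrite (Rabs_right (INR k)) by lra.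
      eapply Rle_trans. apply Rplus_le_compat_r. apply Rabs_triang.
      rewrite (Rabs_right (3 * INR n)) by lra. lra.
    - pose proof (pos_INR n). pose proof (Rabs_pos c). lra. }
  assert (Hp3 : 0 < p ^ 3) by (apply pow_lt; lra).
  set (g := fun n => Rpower p (- Rabs c) * K * (30 * Rabs (27 * x) / p ^ 3) ^ n).
  assert (Hr : Rabs (30 * Rabs (27 * x) / p ^ 3) < 1).
  { assert (H27 : Rabs (27 * x) < 27 / 1000) by (rewrite Rabs_mult, (Rabs_right 27) by lra; lra).
    assert (Hp3' : 98/100 < p ^ 3) by (simpl; nra).
    rewrite Rabs_right. apply Rlt_div_l; [lra|]. pose proof (Rabs_pos (27*x)). lra.
    apply Rle_ge. apply Rdiv_le_0_compat; [|lra]. pose proof (Rabs_pos (27*x)). lra. }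
  assert (Hg : infinite_sum g (Rpower p (- Rabs c) * K * / (1 - 30 * Rabs (27 * x) / p ^ 3))).
  { unfold g. apply isum_scal. apply is_series_Reals. apply is_series_geom. auto. }
  assert (Hug : forall n, Rabs (u n) <= g n).
  { intro n. unfold u, g. rewrite Rpower_split by lra.
    assert (Hrp : 0 < Rpower p (- Rabs c)) by (unfold Rpower; apply exp_pos).
    rewrite Rabs_right.
    2: { apply Rle_ge. apply Rmult_le_pos. apply Rmult_le_pos. apply Rabs_pos. apply pow_le, Rabs_pos.
         apply Rmult_le_pos. lra. apply Rlt_le, Rinv_0_lt_compat, pow_lt; auto. }
    unfold Rdiv. rewrite !Rpow_mult_distr, pow_inv.
    pose proof (HK n). pose proof (pow_le (Rabs (27*x)) n (Rabs_pos _)).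
    assert (0 < / (p ^ 3) ^ n) by (apply Rinv_0_lt_compat, pow_lt; auto).
    apply Rle_trans with (K * 30 ^ n * Rabs (27 * x) ^ n * (Rpower p (- Rabs c) * / (p ^ 3) ^ n)).
    { apply Rmult_le_compat_r. apply Rmult_le_pos; lra. apply Rmult_le_compat_r; auto. }
    right. ring. }
  destruct (isum_cmp u g _ Hug Hg) as [Su HSu].
  assert (Hau : forall n, Rabs (a n) <= u n).
  { intro n. apply abs_isum_le with (T n) (U n); auto. }
  destruct (isum_cmp a u Su Hau HSu) as [L HL].
  pose proof (rearrange T U a u Su L HTU HTa HUu HSu HL) as Hdiag.
  assert (Hterm : forall m n, (n <= m)%nat -> T n (m - n)%nat = Fm (3*t-1/2) b1 b2 m n * x ^ m).
  { intros m n Hnm. unfold T, Fm, cf.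
    replace (m + 2*n)%nat with (3*n + (m-n))%nat by lia.
    rewrite poch_add, <- poch_triple. rewrite mult_INR. simpl (INR 3).
    rewrite <- Hc.
    replace (-(27*x)) with ((-1)*27*x) by ring. rewrite !Rpow_mult_distr.
    replace (x^m) with (x^n * x^(m-n)) by (rewrite <- pow_add; f_equal; lia).
    unfold A, Acoef, poch_prod; simpl fold_right.
    replace (-1/6+t) with (t-1/6) by lra.
    replace (1/6+t) with (t+1/6) by lra.
    replace (1/2+t) with (t+1/2) by lra. replace (1+1+1) with 3 by lra.
    pose proof (fact_nz n). pose proof (fact_nz (m-n)).
    pose proof (poch_nz b1 n hk1). pose proof (poch_nz b2 n hk2).
    field. repeat split; auto. }
  assert (H4 : forall m, sum_f_R0 (fun n => T n (m - n)%nat) m = hyp_term [c; -1/2 - C; -1/2 + C; 3/2 + t] [b1; b2; b3] x m).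
  { intro m. rewrite (sum_eq _ (fun n => Fm (3*t-1/2) b1 b2 m n * x ^ m)) by (intros; apply Hterm; auto).
    rewrite <- scal_sum. rewrite (alg_core t C b1 b2 Hb1 Hb2 HC hk1 hk2 hk3 m).
    unfold hyp_term, Bm, poch_prod; simpl fold_right. rewrite Hb3, Hc.
    pose proof (fact_nz m). pose proof (poch_nz b1 m hk1). pose proof (poch_nz b2 m hk2).
    pose proof (poch_nz _ m hk3).
    field. repeat split; auto. }
  assert (H3 : forall n, hyp_term [-1/6 + t; 1/6 + t; 1/2 + t] [b1; b2] (- (27 * x) / q ^ 3) n = Rpower q c * a n).
  { intro n. unfold hyp_term, a, A, Acoef. rewrite Rpower_split by auto.
    rewrite Rpower_Ropp. unfold Rdiv. rewrite Rpow_mult_distr, pow_inv.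
    assert (0 < Rpower q c) by (unfold Rpower; apply exp_pos).
    assert (0 < (q^3)^n) by (apply pow_lt, pow_lt; auto).
    unfold poch_prod; simpl fold_right.
    pose proof (fact_nz n). pose proof (poch_nz b1 n hk1). pose proof (poch_nz b2 n hk2).
    field. repeat split; auto; lra. }
  exists (Rpower q c * L), L. split; [|split; [|reflexivity]].
  - unfold hyp_sum. apply isum_ext with (fun n => Rpower q c * a n).
    { intro n. symmetry. apply H3. } apply isum_scal; auto.
  - unfold hyp_sum. apply isum_ext with (fun m => sum_f_R0 (fun n => T n (m - n)%nat) m).
    { intro m. apply H4. } auto.
Qed.
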